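(* Let $M$ be a transversal matroid with presentation $\mathcal A=(A_1,\ldots,A_r)$. Let $i\in[r]$ and let $B_i\subseteq E(M)$ with $\mathrm{cl}^*(B_i)=\mathrm{cl}^*(A_i)$. Suppose further that for every $B\subseteq E(M)$ with $B_i\subseteq B$ and $A_i\not\subseteq B$, we have $r^*_M(B)<|B|-|\mathcal A(B)|$. Then $(A_1,\ldots,A_{i-1},B_i,A_{i+1},\ldots,A_r)$ is a presentation of $M$.
   Context: A presentation $\mathcal A$ of a transversal matroid $M$ means $M=M[\mathcal A]$, whose independent sets are the partial transversals of $\mathcal A$. $\mathrm{cl}^*$ and $r^*_M$ are the closure and rank functions of the dual $M^*$. For $X\subseteq E(M)$, $\mathcal A(X)=\{j\in[r]: A_j\subseteq X\}$. *)

(* Defs.v *)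
From mathcomp Require Import all_boot.
Set Implicit Arguments. Unset Strict Implicit. Unset Printing Implicit Defensive.

Section Transversal.
Variable E : finType.

Definition ptrans (r : nat) (A : 'I_r -> {set E}) (X : {set E}) : Prop :=
  exists f : E -> option 'I_r,
    (forall x, x \in X -> exists j, f x = Some j /\ x \in A j) /\
    {in X &, injective f}.

Definition is_presentation (indep : pred {set E}) (r : nat)
  (A : 'I_r -> {set E}) : Prop :=
  forall X : {set E}, indep X <-> ptrans A X.

Definition mrank (indep : pred {set E}) (X : {set E}) : nat :=
  \max_(Y : {set E} | (Y \subset X) && indep Y) #|Y|.

Definition dual_rank (indep : pred {set E}) (X : {set E}) : nat :=
  #|X| + mrank indep (~: X) - mrank indep setT.

Definition dual_cl (indep : pred {set E}) (X : {set E}) : {set E} :=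
  [set e | dual_rank indep (e |: X) == dual_rank indep X].

Definition contained_idx (r : nat) (A : 'I_r -> {set E}) (X : {set E})
  : {set 'I_r} := [set j | A j \subset X].

Definition replace_at (r : nat) (A : 'I_r -> {set E}) (i : 'I_r) (B : {set E})
  : 'I_r -> {set E} := fun j => if j == i then B else A j.

End Transversal.

(* Main.v *)
Require Import Defs.
From mathcomp Require Import all_boot.
From mathcomp Require Import zify.
From Stdlib Require Import Classical.

Set Implicit Arguments. Unset Strict Implicit. Unset Printing Implicit Defensive.

Section Aux.
Variables (E : finType) (r : nat).
Implicit Types (F : 'I_r -> {set E}) (X Y D S P Q : {set E}) (g h : E -> option 'I_r).

Definition matches F X g :=
  (forall x, x \in X -> exists j, g x = Some j /\ x \in F j) /\ {in X &, injective g}.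

Lemma matches_sub F X Y g : matches F X g -> Y \subset X -> matches F Y g.
Proof.
move=> [H1 H2] sYX; split=> [x xY|]; first exact: H1 (subsetP sYX x xY).
by move=> x y xY yY; apply: H2; apply: (subsetP sYX).
Qed.

Lemma ptrans_sub F X Y : ptrans F X -> Y \subset X -> ptrans F Y.
Proof. by move=> [g gm] sYX; exists g; apply: (matches_sub gm sYX). Qed.

Lemma pt_card F X (R : {set 'I_r}) : ptrans F X ->
  (forall x j, x \in X -> x \in F j -> j \in R) -> #|X| <= #|R|.
Proof.
move=> [g [H1 H2]] HR.
rewrite -(card_in_imset H2) -(card_imset R (@Some_inj _)).
apply: subset_leq_card; apply/subsetP=> o /imsetP [x xX ->].
have [j [gx xF]] := H1 x xX; rewrite gx; apply: imset_f; exact: HR xX xF.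
Qed.

Definition Rset g S Y := [set j | [exists y in S :&: Y, g y == Some j]].

Lemma Rset_card g S Y : #|Rset g S Y| <= #|S :&: Y|.
Proof.
rewrite -(card_imset (Rset g S Y) (@Some_inj _)).
apply: leq_trans (leq_imset_card g (S :&: Y)).
apply: subset_leq_card; apply/subsetP=> o /imsetP [j].
rewrite inE => /existsP [y /andP [yS /eqP gy]] ->.
rewrite -gy; exact: imset_f.
Qed.

Definition closedS F g Y S := forall z j, z \in S -> z \in F j ->
  exists y, [/\ y \in S, y \in Y & g y = Some j].

Lemma closed_Rset F g Y S z j : closedS F g Y S -> z \in S -> z \in F j ->
  j \in Rset g S Y.
Proof.
move=> cl zS zF; have [y [yS yY gy]] := cl z j zS zF.
rewrite inE; apply/existsP; exists y; by rewrite inE yS yY gy eqxx.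
Qed.

Lemma obs_card F g Y S X : closedS F g Y S -> ptrans F X -> X \subset S ->
  #|X| <= #|S :&: Y|.
Proof.
move=> cl HX sXS; apply: leq_trans (Rset_card g S Y).
apply: (pt_card HX) => x j xX xF; apply: (closed_Rset cl _ xF).
exact: (subsetP sXS).
Qed.

Definition goodh F g Y S d z h :=
 [/\ forall w, w \in (d |: Y) :\ z -> exists j, [/\ h w = Some j, w \in F j &
        exists y, y \in Y /\ g y = Some j],
     {in (d |: Y) :\ z &, injective h} &
     forall w, w \in Y -> w \notin S -> h w = g w].

Definition Inv F g Y D S := [/\ D \subset S, S \subset Y :|: D &
  forall z, z \in S -> exists d, d \in D /\ exists h, goodh F g Y S d z h].

Lemma card_step Y S y : y \in Y -> y \notin S -> #|Y :\: (y |: S)| < #|Y :\: S|.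
Proof.
move=> yY yS; apply: proper_card; apply/properP; split.
  by apply: setDS; apply: subsetUr.
by exists y; rewrite !inE ?eqxx ?yS ?yY.
Qed.

Lemma one_step F g Y D S : matches F Y g -> Inv F g Y D S ->
  (exists2 d, d \in D & ptrans F (d |: Y)) \/ closedS F g Y S \/
  exists y, [/\ y \in Y, y \notin S & Inv F g Y D (y |: S)].
Proof.
move=> [gF ginj] [sDS sSYD HS].
case: (classic (exists z j, [/\ z \in S, z \in F j &
   ~ exists y, [/\ y \in S, y \in Y & g y = Some j]])) =>
   [[z [j [zS zF Hno]]] | nostep]; last first.
  right; left; move=> z j zS zF; apply: NNPP => H; apply: nostep.
  by exists z, j; split.
have [d [dD [h [hF hinj hag]]]] := HS z zS.
case: (boolP (z \in d |: Y)) => zdY; last first.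
  have memz : forall w, w \in d |: Y -> w \in (d |: Y) :\ z.
    move=> w wdY; rewrite in_setD1 wdY andbT.
    by apply: contraNneq zdY => <-.
  left; exists d => //; exists h; split.
    move=> w /memz /hF [j' [hw wF _]]; by exists j'.
  by move=> w1 w2 /memz w1d /memz w2d; apply: hinj.
pose h' := fun w => if w == z then Some j else h w.
have h'F : forall w, w \in d |: Y -> (exists y, y \in Y /\ g y = Some j) ->
   exists j0, [/\ h' w = Some j0, w \in F j0 & exists y, y \in Y /\ g y = Some j0].
  move=> w wdY Hj; rewrite /h'; case: eqP => [->|/eqP wz]; first by exists j.
  by apply: hF; rewrite in_setD1 wz.
case: (classic (exists y, y \in Y /\ g y = Some j)) => [[y [yY gy]] | nofree].
  have yS : y \notin S by apply/negP => yS; apply: Hno; exists y.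
  have yz : y != z by apply: contraNneq yS => ->.
  have ydz : y \in (d |: Y) :\ z by rewrite in_setD1 yz in_setU1 yY orbT.
  have key : forall w, w != y -> w \in d |: Y -> w != z -> h w != Some j.
    move=> w wy wd wz; apply/eqP => hw.
    have : h w = h y by rewrite hw hag.
    move/hinj; rewrite in_setD1 wz wd => /(_ isT ydz) wy'.
    by rewrite wy' eqxx in wy.
  right; right; exists y; split => //; split.
  - apply: subset_trans sDS (subsetUr _ _).
  - apply/subsetP => w; rewrite in_setU1 => /orP [/eqP -> | wS].
      by rewrite in_setU yY.
    exact: (subsetP sSYD).
  - move=> z'; rewrite in_setU1 => /orP [/eqP -> | z'S].
      exists d; split => //; exists h'; split.
      + move=> w; rewrite in_setD1 => /andP [_ wdY]; apply: h'F => //.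
        by exists y.
      + move=> w1 w2; rewrite !in_setD1 => /andP [w1y w1d] /andP [w2y w2d].
        rewrite /h'.
        case: (eqVneq w1 z) => [-> | w1z]; case: (eqVneq w2 z) => [-> | w2z] //.
        * move=> H; have := key w2 w2y w2d w2z; by rewrite -H eqxx.
        * move=> H; have := key w1 w1y w1d w1z; by rewrite H eqxx.
        * by apply: hinj; rewrite in_setD1 ?w1z ?w2z.
      + move=> w wY; rewrite in_setU1 negb_or => /andP [wy wS].
        have wz : w != z by apply: contraNneq wS => ->.
        by rewrite /h' (negbTE wz); apply: hag.
    have [d' [d'D [h'' [h1 h2 h3]]]] := HS z' z'S.
    exists d'; split => //; exists h''; split => //.
    by move=> w wY; rewrite in_setU1 negb_or => /andP [_ wS]; apply: h3.
have key : forall w, w \in d |: Y -> w != z -> h w != Some j.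
  move=> w wd wz; apply/eqP => hw.
  have : w \in (d |: Y) :\ z by rewrite in_setD1 wz.
  case/hF => j' [hw' _ [y [yY gy]]]; apply: nofree; exists y; split => //.
  by rewrite gy -hw' hw.
left; exists d => //; exists h'; split.
  move=> w wdY; rewrite /h'; case: eqP => [->|/eqP wz]; first by exists j.
  have : w \in (d |: Y) :\ z by rewrite in_setD1 wz.
  by case/hF => j' [hw wF _]; exists j'.
move=> w1 w2 w1d w2d; rewrite /h'.
case: (eqVneq w1 z) => [-> | w1z]; case: (eqVneq w2 z) => [-> | w2z] //.
- move=> H; have := key w2 w2d w2z; by rewrite -H eqxx.
- move=> H; have := key w1 w1d w1z; by rewrite H eqxx.
- by apply: hinj; rewrite in_setD1 ?w1z ?w2z.
Qed.

Lemma aug F Y D g : matches F Y g -> [disjoint D & Y] ->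
  (exists2 d, d \in D & ptrans F (d |: Y)) \/
  (exists S, [/\ D \subset S, S \subset Y :|: D & closedS F g Y S]).
Proof.
move=> gm dDY.
suff main : forall n S, #|Y :\: S| <= n -> Inv F g Y D S ->
  (exists2 d, d \in D & ptrans F (d |: Y)) \/
  (exists S, [/\ D \subset S, S \subset Y :|: D & closedS F g Y S]).
  apply: (main _ D (leqnn _)); split; [exact: subxx | exact: subsetUr |].
  move=> z zD; exists z; split=> //; exists g.
  have [gF ginj] := gm.
  have zY : z \notin Y by move: dDY; rewrite disjoints_subset => /subsetP/(_ z zD); rewrite inE.
  have memY : forall w, w \in (z |: Y) :\ z -> w \in Y.
    by move=> w; rewrite in_setD1 in_setU1 => /andP [wz /orP [/eqP wz'|//]]; rewrite wz' eqxx in wz.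
  split.
  - move=> w /memY wY; have [j [gw wF]] := gF w wY; exists j; split => //.
    by exists w.
  - by move=> w1 w2 /memY w1Y /memY w2Y; apply: ginj.
  - by [].
elim=> [|n IH] S Hn HI; case: (one_step gm HI) => [H|[H|[y [yY yS HI']]]].
- by left.
- by right; exists S; case: HI => ? ? _; split.
- by have := card_step yY yS; rewrite ltnNge (leq_trans Hn).
- by left.
- by right; exists S; case: HI => ? ? _; split.
- apply: (IH (y |: S)) => //; have := card_step yY yS; move: Hn; lia.
Qed.

Lemma augment F P Q : ptrans F P -> ptrans F Q -> #|Q| < #|P| ->
  exists2 x, x \in P :\: Q & ptrans F (x |: Q).
Proof.
move=> HP [g gm] ltQP.
have dj : [disjoint P :\: Q & Q].
  by rewrite disjoints_subset; apply/subsetP => x; rewrite !inE => /andP [].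
case: (aug gm dj) => [//|[S [sDS sSQD cl]]].
exfalso.
have HPS : ptrans F (P :&: S) by apply: (ptrans_sub HP); apply: subsetIl.
have c1 := obs_card cl HPS (subsetIr _ _).
have e1 := cardsID Q P. have e2 := cardsID P Q. have e3 := cardsID Q (P :&: S).
have e4 := cardsID P (S :&: Q).
have s1 : #|P :\: Q| <= #|(P :&: S) :\: Q|.
  apply: subset_leq_card; apply/subsetP => x; rewrite !inE => /andP [xnQ xP].
  by rewrite xnQ xP (subsetP sDS x) // !inE xnQ xP.
have s2 : #|(S :&: Q) :&: P| <= #|(P :&: S) :&: Q|.
  by apply: subset_leq_card; apply/subsetP => x; rewrite !inE => /andP [/andP [-> ->] ->].
have s3 : #|(S :&: Q) :\: P| <= #|Q :\: P|.
  by apply: subset_leq_card; apply/subsetP => x; rewrite !inE => /andP [-> /andP [_ ->]].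
have s4 : #|P :&: Q| = #|Q :&: P| by rewrite setIC.
lia.
Qed.

Lemma gen_aug F P : ptrans F P -> forall k Q, ptrans F Q -> #|Q| + k = #|P| ->
  exists Q', [/\ Q \subset Q', Q' \subset Q :|: P, ptrans F Q' & #|Q'| = #|P|].
Proof.
move=> HP; elim=> [|k IH] Q HQ Hk.
  by exists Q; split; [exact: subxx | exact: subsetUl | done | rewrite -Hk addn0].
have ltQP : #|Q| < #|P| by lia.
have [x xPQ HxQ] := augment HP HQ ltQP.
move: xPQ; rewrite inE => /andP [xnQ xP].
have := IH _ HxQ; rewrite cardsU1 xnQ => /(_ _) [|Q' [s1 s2 HQ' cQ']]; first by lia.
exists Q'; split => //.
  by apply: subset_trans s1; apply: subsetUr.
apply: subset_trans s2 _; apply/subsetP => w; rewrite !inE.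
by case/orP => [/orP [/eqP ->|->]|->]; rewrite ?xP ?orbT.
Qed.

Lemma slot_cases F G (i : 'I_r) X : (forall j, j != i -> F j = G j) -> ptrans F X ->
  ptrans G X \/ exists x0 g, [/\ x0 \in X, x0 \in F i, matches G (X :\ x0) g &
     forall y, y \in X :\ x0 -> g y != Some i].
Proof.
move=> FG [f [fF finj]].
case: (classic (exists x0, x0 \in X /\ f x0 = Some i)) => [[x0 [x0X fx0]]|none].
  right; exists x0, f.
  have ne : forall y, y \in X :\ x0 -> f y != Some i.
    move=> y; rewrite in_setD1 => /andP [yx0 yX]; apply/eqP => fy.
    have := finj y x0 yX x0X; rewrite fy fx0 => /(_ erefl) e.
    by rewrite e eqxx in yx0.
  split => //.
  - by have [j [fj xF]] := fF x0 x0X; move: fj; rewrite fx0 => [[->]].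
  - split.
      move=> y yD; have := ne y yD; move: yD; rewrite in_setD1 => /andP [_ yX].
      have [j [fy yF]] := fF y yX; rewrite fy => ji; exists j; split => //.
      rewrite -FG //; by apply: contraNneq ji => ->.
    by move=> y1 y2; rewrite !in_setD1 => /andP [_ y1X] /andP [_ y2X]; apply: finj.
left; exists f; split => // x xX.
have [j [fx xF]] := fF x xX; exists j; split => //.
rewrite -FG //; apply/eqP => ji; apply: none; exists x; by rewrite fx ji.
Qed.

End Aux.

Theorem lemma2p7 (E : finType) (indep : pred {set E}) (r : nat)
  (A : 'I_r -> {set E}) (i : 'I_r) (Bi : {set E}) :
  is_presentation indep A ->
  dual_cl indep Bi = dual_cl indep (A i) ->
  (forall B : {set E}, Bi \subset B -> ~~ (A i \subset B) ->
     dual_rank indep B + #|contained_idx A B| < #|B|) ->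
  is_presentation indep (replace_at A i Bi).
Proof.
move=> pres hcl H.
have AA' : forall j, j != i -> A j = replace_at A i Bi j.
  by move=> j ji; rewrite /replace_at (negbTE ji).
have A'A : forall j, j != i -> replace_at A i Bi j = A j.
  by move=> j ji; rewrite AA'.
have rk_ge : forall X Y : {set E}, Y \subset X -> ptrans A Y -> #|Y| <= mrank indep X.
  move=> X Y sYX HY; rewrite /mrank; apply: (leq_bigmax_cond Y).
  by rewrite sYX /=; exact: (proj2 (pres Y) HY).
have rk_max : forall X : {set E}, exists2 P : {set E}, (P \subset X) && indep P & mrank indep X = #|P|.
  move=> X.
  have : 0 < #|[pred Z : {set E} | (Z \subset X) && indep Z]|.
    apply/card_gt0P; exists set0; rewrite inE sub0set /=.
    apply: (proj2 (pres set0)); exists (fun _ => None); split; first by move=> x; rewrite inE.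
    by move=> x y; rewrite inE.
  move=> H0; have [P PA e] := eq_bigmax_cond (fun Z : {set E} => #|Z|) H0.
  exists P; first by move: PA; rewrite inE.
  rewrite -e /mrank; apply: eq_bigl => Z; by rewrite inE.
have ptT : forall Z : {set E}, ptrans A Z -> #|Z| <= r.
  move=> Z HZ; have := @pt_card _ _ A Z setT HZ (fun _ _ _ _ => in_setT _).
  by rewrite cardsT card_ord.
have r2 : mrank indep setT <= r.
  by apply/bigmax_leqP => Z /andP [_ iZ]; apply: ptT; apply: (proj1 (pres Z)).
move=> X; split.
- move/(proj1 (pres X)) => HX.
  case: (slot_cases AA' HX) => [//|[a [g [aX aAi gm gni]]]].
  have aY : a \notin X :\ a by rewrite in_setD1 eqxx.
  have dj : [disjoint [set a] & X :\ a] by rewrite disjoints1.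
  case: (aug gm dj) => [[d]|[S [sDS sSYD cl]]].
    by rewrite inE => /eqP ->; rewrite setD1K.
  exfalso.
  have aS : a \in S by rewrite (subsetP sDS) ?set11.
  have sSX : S \subset X.
    apply/subsetP => w /(subsetP sSYD).
    by rewrite in_setU in_setD1 in_set1 => /orP [/andP [_ ->]|/eqP ->].
  have HS : ptrans A S := ptrans_sub HX sSX.
  have sBi : Bi \subset ~: S.
    apply/subsetP => b bB; rewrite inE; apply/negP => bS.
    have := cl b i bS; rewrite /replace_at eqxx => /(_ bB) [y [_ yY gy]].
    by have := gni y yY; rewrite gy eqxx.
  have nAi : ~~ (A i \subset ~: S) by apply/subsetPn; exists a => //; rewrite inE aS.
  have := H _ sBi nAi; rewrite /dual_rank setCK.
  have r1 : #|S| <= mrank indep S := rk_ge S S (subxx _) HS.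
  have sub : ~: contained_idx A (~: S) \subset i |: Rset g S (X :\ a).
    apply/subsetP => j; rewrite in_setC /contained_idx inE => /subsetPn [z zAj].
    rewrite in_setC negbK => zS; rewrite in_setU1.
    case: (eqVneq j i) => [->|ji] //=.
    by apply: (closed_Rset cl zS); rewrite -AA'.
  have c1 := cardsC (contained_idx A (~: S)); rewrite card_ord in c1.
  have c2 := subset_leq_card sub; rewrite cardsU1 in c2.
  have c5 : #|~: contained_idx A (~: S)| <= 1 + #|Rset g S (X :\ a)|.
    by apply: leq_trans c2 _; rewrite leq_add2r leq_b1.
  clear c2.
  have c3 := Rset_card g S (X :\ a).
  have c4 : S :&: (X :\ a) \subset S :\ a.
    apply/subsetP => w; rewrite in_setI => /andP [wS wY].
    rewrite in_setD1 wS andbT; apply: contraTneq wY => ->; exact: aY.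
  move/subset_leq_card: c4 => c4; have c6 := cardsD1 a S; rewrite aS /= in c6.
  move=> hH; clear -c1 c3 c4 c5 c6 r1 r2 hH; lia.
- move=> HX'; apply: (proj2 (pres X)).
  case: (slot_cases A'A HX') => [//|[b [g [bX bBi gm gni]]]].
  rewrite /replace_at eqxx in bBi.
  have bY : b \notin X :\ b by rewrite in_setD1 eqxx.
  have dj : [disjoint [set b] & X :\ b] by rewrite disjoints1.
  case: (aug gm dj) => [[d]|[S [sDS sSYD cl]]].
    by rewrite inE => /eqP ->; rewrite setD1K.
  exfalso.
  have bS : b \in S by rewrite (subsetP sDS) ?set11.
  have SW : S \subset ~: A i.
    apply/subsetP => z zS; rewrite inE; apply/negP => zA.
    have [y [_ yY gy]] := cl z i zS zA.
    by have := gni y yY; rewrite gy eqxx.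
  have bA : b \notin A i by have := subsetP SW b bS; rewrite inE.
  have hb : b \in dual_cl indep (A i).
    rewrite -hcl /dual_cl inE.
    have -> : b |: Bi = Bi by apply/setUidPr; rewrite sub1set.
    by [].
  move: hb; rewrite /dual_cl inE => /eqP; rewrite /dual_rank cardsU1 bA /=.
  have [P /andP [PW iP] eP] := rk_max (~: A i).
  have HP : ptrans A P := proj1 (pres P) iP.
  have sQ0 : S :\ b \subset X :\ b.
    apply/subsetP => w; rewrite in_setD1 => /andP [wb wS].
    move: (subsetP sSYD w wS); rewrite in_setU in_set1 (negbTE wb) orbF.
    done.
  have HQ0 : ptrans A (S :\ b) by exists g; apply: (matches_sub gm sQ0).
  have sQ0W : S :\ b \subset ~: A i.
    by apply: subset_trans SW; apply: subsetDl.
  have cQ0 := rk_ge _ _ sQ0W HQ0; rewrite eP in cQ0.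
  have ek : #|S :\ b| + (#|P| - #|S :\ b|) = #|P| by clear -cQ0; lia.
  have [Q' [s1 s2 HQ' cQ']] := gen_aug HP HQ0 ek.
  have bQ : b \notin Q'.
    apply/negP => bQ.
    have sSQ : S \subset Q'.
      apply/subsetP => w wS; case: (eqVneq w b) => [->//|wb].
      by apply: (subsetP s1); rewrite in_setD1 wb wS.
    have := obs_card cl (ptrans_sub HQ' sSQ) (subxx S).
    have c4 : S :&: (X :\ b) \subset S :\ b.
      apply/subsetP => w; rewrite in_setI => /andP [wS wY].
      rewrite in_setD1 wS andbT; apply: contraTneq wY => ->; exact: bY.
    move/subset_leq_card: c4 => c4; have c6 := cardsD1 b S; rewrite bS /= in c6.
    move=> hc; clear -hc c4 c6; lia.
  have sQ : Q' \subset ~: (b |: A i).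
    apply/subsetP => w wQ; rewrite in_setC in_setU1 negb_or.
    have -> : w != b by apply: contraNneq bQ => <-.
    have := subsetP s2 w wQ; rewrite in_setU => /orP [wS|wP].
      by have := subsetP sQ0W w wS; rewrite inE.
    by have := subsetP PW w wP; rewrite inE.
  have rQ := rk_ge _ _ sQ HQ'.
  have [P0 /andP [_ iP0] e0] := rk_max setT.
  have HP0 : ptrans A P0 := proj1 (pres P0) iP0.
  have d1 := cardsID (A i) P0.
  have d2 : #|P0 :&: A i| <= #|A i| by apply: subset_leq_card; apply: subsetIr.
  have d3 : #|P0 :\: A i| <= mrank indep (~: A i).
    apply: rk_ge; last by apply: (ptrans_sub HP0); apply: subsetDl.
    by apply/subsetP => w; rewrite !inE => /andP [-> _].
  move=> hE; clear -hE eP cQ' rQ e0 d1 d2 d3; lia.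
Qed.
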